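(* Let $G=(U\sqcup V,E)$ be an undirected bipartite graph with parts $U$ and $V$, $|U|=|V|=r\ge 2$. Assume that for any distinct $u,u'\in U$ and any distinct $v,v'\in V$, the number of edges of $G$ with both endpoints in $\{u,u',v,v'\}$ is not equal to $1$. Then for every vertex $x\in U\sqcup V$ with positive degree in the bipartite complement $\overline{G}$, the connected component of $\overline{G}$ containing $x$ is a complete bipartite graph with partition classes $U\cap W$ and $V\cap W$, where $W$ is the vertex set of that component.
   Context: The bipartite complement of a bipartite graph $G=(U\sqcup V,E)$ is $\overline{G}=(U\sqcup V,\overline{E})$ with $\overline{E}=\{\{u,v\}:u\in U,v\in V,\{u,v\}\notin E\}$. *)

(* Defs.v *)
From mathcomp Require Import all_boot all_order.
Set Implicit Arguments. Unset Strict Implicit. Unset Printing Implicit Defensive.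

(* The vertex set is the sum type U + V (inl = part U, inr = part V). *)

Definition badj (U V : finType) (E : U -> V -> bool) : rel (U + V) :=
  fun a b => match a, b with
             | inl u, inr v => E u v
             | inr v, inl u => E u v
             | _, _ => false
             end.

Definition bcompl_adj (U V : finType) (E : U -> V -> bool) : rel (U + V) :=
  fun a b => match a, b with
             | inl u, inr v => ~~ E u v
             | inr v, inl u => ~~ E u v
             | _, _ => false
             end.

Definition bcompl_deg (U V : finType) (E : U -> V -> bool) (x : U + V) : nat :=
  #|[set y | bcompl_adj E x y]|.

Definition bcompl_comp (U V : finType) (E : U -> V -> bool) (x : U + V)
  : {set U + V} := [set y | connect (bcompl_adj E) x y].

Definition opp_sides (U V : finType) (a b : U + V) : bool :=
  match a, b with
  | inl _, inr _ | inr _, inl _ => true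
  | _, _ => false
  end.

(* Number of edges of G with both endpoints in {u,u',v,v'} (u ≠ u', v ≠ v'). *)
Definition edges4 (U V : finType) (E : U -> V -> bool) u u' v v' : nat :=
  (E u v + E u v' + E u' v + E u' v')%N.

(* Main.v *)
Require Import Defs.
From mathcomp Require Import all_boot all_order.

Set Implicit Arguments.
Section P.
Variables (U V : finType) (E : U -> V -> bool).
Hypothesis H4 : forall {u u' : U} {v v' : V}, u != u' -> v != v' -> edges4 E u u' v v' != 1.
Local Notation H := (bcompl_adj E).

Lemma Hsym a b : H a b = H b a.
Proof. by case: a => a; case: b => b. Qed.

Lemma H_opp a b : H a b -> opp_sides a b.
Proof. by case: a => a; case: b => b. Qed.

Lemma rule a c b b' : H a c -> H c b -> H b b' -> a != b -> c != b' -> H a b'.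
Proof.
case: a => a; case: c => c //; case: b => b //; case: b' => b' //=.
- move=> /negbTE h1 /negbTE h2 /negbTE h3 n1 n2; apply/negP => h4.
  have n1' : a != b by apply: contraNneq n1 => ->.
  have n2' : c != b' by apply: contraNneq n2 => ->.
  have := H4 n1' n2'; rewrite /edges4 h1 h2 h3 h4 //.
- move=> /negbTE h1 /negbTE h2 /negbTE h3 n1 n2; apply/negP => h4.
  have n1' : a != b by apply: contraNneq n1 => ->.
  have n2' : c != b' by apply: contraNneq n2 => ->.
  have := H4 n2' n1'; rewrite /edges4 h1 h2 h3 h4 //.
Qed.

Definition Q a b := (opp_sides a b -> H a b) /\
  (~~ opp_sides a b -> b = a \/ exists c, H a c /\ H c b).

Lemma Qstep a b b' : Q a b -> H b b' -> Q a b'.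
Proof.
move=> [Q1 Q2] hb; rewrite /Q.
have hop := H_opp _ _ hb.
case ob: (opp_sides a b).
- have hab := Q1 ob.
  have ob' : opp_sides a b' = false.
    by move: ob hop; case: a {Q1 Q2 hab} => a; case: b {hb} => b; case: b' => b'.
  rewrite ob'; split => // _; right; exists b; by [].
- have ob' : opp_sides a b' = true.
    by move: ob hop; case: a {Q1 Q2} => a; case: b {hb} => b; case: b' => b'.
  rewrite ob'; split => // _.
  case: (Q2 (negbT ob)) => [eba | [c [hac hcb]]]; first by rewrite -eba.
  case: (eqVneq c b') => [<- // | ncb].
  case: (eqVneq a b) => [eab | nab].
    by rewrite eab.
  exact: (rule _ _ _ _ hac hcb hb nab ncb).
Qed.

Lemma Qconn a b : connect H a b -> Q a b.
Proof.
move/connectP=> [p pth ->] {b}.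
elim/last_ind: p pth => [|p z IH].
  move=> _ /=; split; first by case: a.
  by move=> _; left.
rewrite rcons_path => /andP [pp hz]; rewrite last_rcons.
exact: Qstep (IH pp) hz.
Qed.

End P.

Theorem proposition7 (U V : finType) (E : U -> V -> bool) (r : nat) :
  #|U| = r -> #|V| = r -> 2 <= r ->
  (forall (u u' : U) (v v' : V), u != u' -> v != v' -> edges4 E u u' v v' != 1) ->
  forall x : U + V, 0 < bcompl_deg E x ->
    (* the induced subgraph of the complement on W = component of x is the
       complete bipartite graph with classes U ∩ W and V ∩ W *)
    forall y z : U + V, y \in bcompl_comp E x -> z \in bcompl_comp E x ->
      bcompl_adj E y z = opp_sides y z.
Proof.
move=> _ _ _ H4 x _ y z; rewrite !inE => cy cz.
have sym : connect_sym (bcompl_adj E).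
  by apply: sym_connect_sym => a b; apply: Hsym.
have cyz : connect (bcompl_adj E) y z.
  by apply: connect_trans cz; rewrite sym.
have [Q1 _] := @Qconn _ _ E H4 _ _ cyz.
case o: (opp_sides y z); first exact: Q1.
by apply/negbTE/negP => /H_opp; rewrite o.
Qed.
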